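(* Let $m\ge 2$ be even and $n$ a multiple of $m/2$. If $S\subseteq\{0,1\}^n$ is a set of mutually incomparable solutions with respect to $m$-LOTZ, then $|S|\le(2n/m+1)^{m-1}$.
   Context: $m$-LOTZ: $\{0,1\}^n\to\mathbb N_0^m$ is defined by splitting $x$ into $m/2$ consecutive blocks of length $2n/m$; for block $k\in[m/2]$ (bits $x_{(k-1)2n/m+1},\dots,x_{k\cdot 2n/m}$), $f_{2k-1}(x)$ is the number of leading ones of the block (length of its longest all-ones prefix) and $f_{2k}(x)$ is the number of trailing zeros of the block (length of its longest all-zeros suffix). All objectives are maximized. $x\succeq y$ iff $f_j(x)\ge f_j(y)$ for all $j$; $x,y$ are incomparable if neither $x\succeq y$ nor $y\succeq x$; $S$ is a set of mutually incomparable solutions if any two distinct elements of $S$ are incomparable. *)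

(* Defs.v *)
From mathcomp Require Import all_boot.
Set Implicit Arguments. Unset Strict Implicit. Unset Printing Implicit Defensive.

(* Bit strings of length n: n.-tuple bool (bit i = x`_i, 0-indexed). *)

Definition leading_ones (s : seq bool) : nat := find negb s.
Definition trailing_zeros (s : seq bool) : nat := find id (rev s).

(* block length 2n/m = n / (m/2) *)
Definition blen (m n : nat) : nat := n %/ m./2.

Definition block (m n : nat) (x : n.-tuple bool) (k : nat) : seq bool :=
  take (blen m n) (drop (k * blen m n) x).

Definition mLOTZ (m n : nat) (x : n.-tuple bool) (j : nat) : nat :=
  if odd j then trailing_zeros (block m x j./2)
  else leading_ones (block m x j./2).

Definition dominates (m n : nat) (x y : n.-tuple bool) : Prop :=
  forall j : 'I_m, mLOTZ m y j <= mLOTZ m x j.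

Definition incomparable (m n : nat) (x y : n.-tuple bool) : Prop :=
  ~ dominates m x y /\ ~ dominates m y x.

Definition mutually_incomparable (m n : nat) (S : {set n.-tuple bool}) : Prop :=
  forall x y, x \in S -> y \in S -> x != y -> incomparable m x y.

(* Main.v *)
Require Import Defs.
From mathcomp Require Import all_boot.
From mathcomp Require Import zify.

Lemma mLOTZ_le m n (x : n.-tuple bool) j : mLOTZ m x j <= blen m n.
Proof.
rewrite /mLOTZ /leading_ones /trailing_zeros.
have Hs : size (block m x j./2) <= blen m n by rewrite /block size_take_min geq_minl.
case: ifP => _.
  by apply: leq_trans (find_size _ _) _; rewrite size_rev.
by apply: leq_trans (find_size _ _) _.
Qed.

Theorem lemma5 (m n : nat) (S : {set n.-tuple bool}) :
  2 <= m -> ~~ odd m -> (m./2 %| n) ->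
  mutually_incomparable m S ->
  #|S| <= ((2 * n) %/ m).+1 ^ (m - 1).
Proof.
move=> Hm Hodd _ Hinc.
have Hb : (2 * n) %/ m = blen m n.
  have Hme : m = 2 * m./2.
    by have := odd_double_half m; rewrite (negbTE Hodd) add0n -muln2 mulnC.
  rewrite /blen {1}Hme divnMl //.
pose F (x : n.-tuple bool) : {ffun 'I_(m-1) -> 'I_(blen m n).+1} :=
  [ffun i : 'I_(m-1) => inord (mLOTZ m x i)].
have inj : {in S &, injective F}.
  move=> x y xS yS Hxy; apply/eqP; apply/negPn/negP => Hne.
  have [nxy nyx] := Hinc x y xS yS Hne.
  have Heq : forall j : 'I_m, j < m - 1 -> mLOTZ m x j = mLOTZ m y j.
    move=> j Hj.
    have := congr1 (fun f : {ffun 'I_(m-1) -> 'I_(blen m n).+1} => nat_of_ord (f (Ordinal Hj))) Hxy.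
    by rewrite /F !ffunE /= !inordK // ltnS mLOTZ_le.
  have Hlast : forall j : 'I_m, ~~ (j < m - 1) -> nat_of_ord j = m - 1.
    move=> j Hj; have := ltn_ord j; move: Hj; rewrite -ltnNge => Hj Hj2.
    lia.
  case: (leqP (mLOTZ m y (m-1)) (mLOTZ m x (m-1))) => H.
    apply: nxy => j; case: (boolP (j < m - 1)) => Hj; first by rewrite Heq.
    by rewrite (Hlast j Hj).
  apply: nyx => j; case: (boolP (j < m - 1)) => Hj; first by rewrite Heq.
  by rewrite (Hlast j Hj) ltnW.
rewrite -(card_in_imset inj) Hb.
apply: leq_trans (max_card _) _.
by rewrite card_ffun !card_ord.
Qed.
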